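(* Let $Q$ be a commutative A-loop and for $x\in Q$ let $P_x = L_xL_{x^{-1}}^{-1}$, i.e. $yP_x = x^{-1}\backslash(xy)$. Then for all $x,y\in Q$, $P_xP_yP_x = P_{yP_x}$ (maps composed left to right). In particular, $P_Q=\{P_x : x\in Q\}$ is a twisted subgroup of $\mathrm{Mlt}(Q)$.
   Context: A loop is a set with a binary operation and neutral element $1$ in which all left translations $L_x:y\mapsto xy$ and right translations $y\mapsto yx$ are bijections; $\mathrm{Mlt}(Q)$ is the group they generate and $\mathrm{Inn}(Q)$ the stabilizer of $1$ in it. A commutative A-loop is a commutative loop all of whose inner mappings are automorphisms. Maps act on the right: $yL_x=xy$, and $y(\alpha\beta)=(y\alpha)\beta$. $x\backslash y$ is the unique $z$ with $xz=y$; $x^{-1}=x\backslash 1$. A twisted subgroup of a group $G$ is a subset $T\subseteq G$ with $1\in T$, $a^{-1}\in T$ for $a\in T$, and $aba\in T$ for $a,b\in T$. *)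

(* Defs.v *)
Set Implicit Arguments.

(* A loop: a set with a binary operation and neutral element 1 in which all
   left and right translations are bijections.  The bijectivity is expressed
   equationally through the (unique) left and right divisions:
   ldiv x y = x\y (the unique z with x z = y), rdiv y x = y/x (unique z with z x = y). *)
Record loop := Loop {
  carrier :> Type;
  mul : carrier -> carrier -> carrier;
  one : carrier;
  ldiv : carrier -> carrier -> carrier;
  rdiv : carrier -> carrier -> carrier;
  mul1q : forall x, mul one x = x;
  mulq1 : forall x, mul x one = x;
  ldivK : forall x y, ldiv x (mul x y) = y;
  mulK_ldiv : forall x y, mul x (ldiv x y) = y;
  rdivK : forall x y, rdiv (mul y x) x = y;
  mulK_rdiv : forall x y, mul (rdiv y x) x = y
}.

Arguments mul {l}.
Arguments one {l}.
Arguments ldiv {l}.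
Arguments rdiv {l}.

Section LoopDefs.
Variable Q : loop.

(* Maps act on the right: y L_x = x y, y R_x = y x.  We represent a map
   alpha as a function, so y alpha = alpha y and y (alpha beta) = beta (alpha y). *)
Definition Lt (x : Q) : Q -> Q := fun y => mul x y.
Definition Rt (x : Q) : Q -> Q := fun y => mul y x.

(* Mlt(Q): the group generated by all left and right translations; it is the
   closure of the identity under composition with translations and their inverses. *)
Inductive mlt : (Q -> Q) -> Prop :=
  | mlt_id : mlt (fun y => y)
  | mlt_L x f : mlt f -> mlt (fun y => Lt x (f y))
  | mlt_Linv x f : mlt f -> mlt (fun y => ldiv x (f y))
  | mlt_R x f : mlt f -> mlt (fun y => Rt x (f y))
  | mlt_Rinv x f : mlt f -> mlt (fun y => rdiv (f y) x).

Definition inner_map (f : Q -> Q) : Prop := mlt f /\ f one = one.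

Definition commutative_loop : Prop := forall x y : Q, mul x y = mul y x.

(* Every inner mapping is an automorphism (it is already a bijection,
   being in Mlt(Q); it remains to be multiplicative). *)
Definition A_loop : Prop :=
  forall f, inner_map f -> forall x y : Q, f (mul x y) = mul (f x) (f y).

Definition commutative_A_loop : Prop := commutative_loop /\ A_loop.

Definition linv (x : Q) : Q := ldiv x one.

Definition P (x : Q) : Q -> Q := fun y => ldiv (linv x) (mul x y).

Definition P_set (f : Q -> Q) : Prop := exists x : Q, f = P x.

Definition twisted_subgroup_of_mlt (T : (Q -> Q) -> Prop) : Prop :=
  (forall a, T a -> mlt a) /\
  T (fun y => y) /\
  (forall a, T a -> exists b, T b /\ (forall y, b (a y) = y) /\ (forall y, a (b y) = y)) /\
  (forall a b, T a -> T b -> T (fun y => a (b (a y)))).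

End LoopDefs.
Arguments Lt {Q}.
Arguments Rt {Q}.
Arguments mlt {Q}.
Arguments inner_map {Q}.
Arguments linv {Q}.
Arguments P {Q}.
Arguments P_set {Q}.
Arguments twisted_subgroup_of_mlt {Q}.

(* Main.v *)
Require Import Defs.
From Stdlib Require Import FunctionalExtensionality Setoid.
Set Implicit Arguments.

Arguments ldivK {l}.
Arguments mulK_ldiv {l}.
Arguments mul1q {l}.
Arguments mulq1 {l}.

Section S.
Variable Q : loop.
Hypothesis HC : commutative_loop Q.
Hypothesis HA : A_loop Q.

Lemma lcancel (a b c : Q) : mul a b = mul a c -> b = c.
Proof. intro H. rewrite <- (ldivK a b), <- (ldivK a c), H. reflexivity. Qed.

Lemma ldiv_eq (a b c : Q) : mul a c = b -> ldiv a b = c.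
Proof. intro H. rewrite <- H. apply ldivK. Qed.

Lemma mul_linv (x : Q) : mul x (linv x) = one.
Proof. unfold linv. apply mulK_ldiv. Qed.

Lemma linv_mul (x : Q) : mul (linv x) x = one.
Proof. rewrite HC. apply mul_linv. Qed.

Lemma linvK (x : Q) : linv (linv x) = x.
Proof. unfold linv at 1. apply ldiv_eq. apply linv_mul. Qed.

Lemma ldiv_self (t : Q) : ldiv t t = one.
Proof. apply ldiv_eq. apply mulq1. Qed.

Lemma inner_inv (f : Q -> Q) : mlt f -> f one = one -> forall z, f (linv z) = linv (f z).
Proof.
  intros Hm H1 z. unfold linv at 2. symmetry. apply ldiv_eq.
  rewrite <- (HA (conj Hm H1)). rewrite mul_linv. exact H1.
Qed.

Lemma aaip (x y : Q) : linv (mul x y) = mul (linv x) (linv y).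
Proof.
  set (s := mul x y). set (t := mul (linv y) s).
  set (h := fun z => ldiv t (mul s (mul (linv y) z))).
  assert (Hm : mlt h).
  { exact (mlt_Linv t (mlt_L s (mlt_L (linv y) (mlt_id Q)))). }
  assert (H1 : h one = one).
  { unfold h. rewrite mulq1. fold t. replace (mul s (linv y)) with t by (unfold t; apply HC).
    apply ldiv_self. }
  assert (Hmul := HA (conj Hm H1)).
  assert (Hy : h y = ldiv t s).
  { unfold h. rewrite linv_mul, mulq1. reflexivity. }
  assert (Hs : h s = s).
  { unfold h. fold t. rewrite HC. apply ldivK. }
  assert (Hx : h x = t).
  { assert (E : mul (h x) (h y) = mul t (ldiv t s)).
    { rewrite <- Hmul. fold s. rewrite Hs. symmetry. apply mulK_ldiv. }
    rewrite Hy in E.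
    rewrite (HC (h x)), (HC t) in E. eapply lcancel; exact E. }
  assert (Hx' : h (linv x) = linv t).
  { rewrite (inner_inv Hm H1). rewrite Hx. reflexivity. }
  assert (E : mul s (mul (linv y) (linv x)) = one).
  { unfold h in Hx'. unfold linv at 3 in Hx'.
    rewrite <- (mulK_ldiv t (mul s (mul (linv y) (linv x)))).
    rewrite Hx'. apply mulK_ldiv. }
  unfold linv at 1. apply ldiv_eq. rewrite (HC (linv x)). exact E.
Qed.

Lemma aaip_div (a b : Q) : linv (ldiv a b) = ldiv (linv a) (linv b).
Proof.
  symmetry. apply ldiv_eq. rewrite <- aaip. rewrite mulK_ldiv. reflexivity.
Qed.

Lemma main_id (x y z : Q) : P x (P y (P x z)) = P (P x y) z.
Proof.
  set (c := P x y).
  set (Pi := fun w => ldiv x (mul (linv x) w)).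
  assert (PiP : forall w, Pi (P x w) = w).
  { intro w. unfold Pi, P. rewrite mulK_ldiv. apply ldivK. }
  set (u := fun v => mul c (ldiv x (mul (linv x) (ldiv y v)))).
  assert (Hm : mlt u).
  { exact (mlt_L c (mlt_Linv x (mlt_L (linv x) (mlt_Linv y (mlt_id Q))))). }
  assert (Hc' : linv c = ldiv x (mul (linv x) (linv y))).
  { unfold c, P. rewrite aaip_div, linvK, aaip. reflexivity. }
  assert (H1 : u one = one).
  { unfold u. fold (linv y). rewrite <- Hc'. apply mul_linv. }
  assert (Hi : forall w, mul c w = u (mul y (P x w))).
  { intro w. unfold u. rewrite ldivK. fold (Pi (P x w)). rewrite PiP. reflexivity. }
  assert (HPJ : forall w, linv (P x (linv w)) = Pi w).
  { intro w. unfold P, Pi. rewrite aaip_div, aaip, !linvK. reflexivity. }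
  assert (Hii : forall w, mul (linv c) w = u (mul (linv y) (Pi w))).
  { intro w.
    rewrite <- (linvK w) at 1. rewrite <- aaip. rewrite Hi.
    rewrite <- (inner_inv Hm H1). rewrite aaip, HPJ. reflexivity. }
  symmetry. change (ldiv (linv c) (mul c z) = P x (P y (P x z))). apply ldiv_eq.
  rewrite Hii, PiP. unfold P at 1. rewrite mulK_ldiv. symmetry. apply Hi.
Qed.

End S.

Theorem lemma3p3 (Q : loop) (HQ : commutative_A_loop Q) :
  (forall x y z : Q, P x (P y (P x z)) = P (P x y) z) /\
  twisted_subgroup_of_mlt (@P_set Q).
Proof.
  destruct HQ as [HC HA].
  split.
  { intros. apply main_id; assumption. }
  split; [|split; [|split]].
  - intros a [x ->]. exact (mlt_Linv (linv x) (mlt_L x (mlt_id Q))).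
  - exists one. apply functional_extensionality. intro z. unfold P.
    assert (E : linv (one : Q) = one) by (unfold linv; apply ldiv_self).
    rewrite E, mul1q. rewrite <- (mul1q z) at 2. symmetry. apply ldivK.
  - intros a [x ->]. exists (P (linv x)). split; [exists (linv x); reflexivity|].
    split; intro y; unfold P.
    + rewrite (linvK HC), mulK_ldiv. apply ldivK.
    + rewrite (linvK HC), mulK_ldiv. apply ldivK.
  - intros a b [x ->] [w ->]. exists (P x w).
    apply functional_extensionality. intro z. apply main_id; assumption.
Qed.
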